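(* For all $x\in\mathbb{C}\setminus\{0,\pm2i,\pm\sqrt2\,i\}$ and all integers $n\ge0$, \[ \sum_{k=0}^n\Big(\frac{2}{x^2+2}\Big)^kL_{2k}(x)=\frac{2^{n+1}}{x(x^2+2)^n}F_{2n+2}(x) \] and \[ \sum_{k=0}^n\Big(\frac{2}{x^2+2}\Big)^kF_{2k}(x)=\frac{x^2+2}{x(x^2+4)}\bigg(\Big(\frac{2}{x^2+2}\Big)^{n+1}L_{2n+2}(x)-2\bigg). \]
   Context: The Fibonacci polynomials $F_n(x)$ and Lucas polynomials $L_n(x)$ are defined by $F_0(x)=0$, $F_1(x)=1$, $L_0(x)=2$, $L_1(x)=x$ and $W_n(x)=xW_{n-1}(x)+W_{n-2}(x)$ for $n\ge2$ (for $W=F$ and $W=L$). Here $i=\sqrt{-1}$. *)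

(* Defs.v *)
From HB Require Import structures.
From mathcomp Require Import all_boot all_order all_algebra.
From mathcomp Require Import complex.
Set Implicit Arguments. Unset Strict Implicit. Unset Printing Implicit Defensive.
Import Order.TTheory GRing.Theory Num.Theory.
Local Open Scope ring_scope.

Fixpoint fibLuc_pair (R : comRingType) (a b : {poly R}) (n : nat)
  : {poly R} * {poly R} :=
  match n with
  | 0%N => (a, b)
  | n'.+1 => let p := fibLuc_pair a b n' in (p.2, 'X * p.2 + p.1)
  end.

Definition fibP (R : comRingType) (n : nat) : {poly R} :=
  (fibLuc_pair 0 1 n).1.
Definition lucP (R : comRingType) (n : nat) : {poly R} :=
  (fibLuc_pair 2%:R 'X n).1.

(* Main.v *)
Require Import Defs.
From HB Require Import structures.
From mathcomp Require Import all_boot all_order all_algebra.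
From mathcomp Require Import complex.
From mathcomp Require Import ring zify.
Import Order.TTheory GRing.Theory Num.Theory.
Local Open Scope ring_scope.

Lemma fibS (R : comNzRingType) n : fibP R n.+2 = 'X * fibP R n.+1 + fibP R n.
Proof. by []. Qed.
Lemma lucS (R : comNzRingType) n : lucP R n.+2 = 'X * lucP R n.+1 + lucP R n.
Proof. by []. Qed.

Lemma fibE (F : comNzRingType) (x : F) n :
  (fibP F n.+2).[x] = x * (fibP F n.+1).[x] + (fibP F n).[x].
Proof. by rewrite fibS hornerD hornerM hornerX. Qed.
Lemma lucE (F : comNzRingType) (x : F) n :
  (lucP F n.+2).[x] = x * (lucP F n.+1).[x] + (lucP F n).[x].
Proof. by rewrite lucS hornerD hornerM hornerX. Qed.
Lemma fib01 (F : comNzRingType) (x : F) : (fibP F 0).[x] = 0 /\ (fibP F 1).[x] = 1.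
Proof. by rewrite /fibP /= !hornerE. Qed.
Lemma luc01 (F : comNzRingType) (x : F) : (lucP F 0).[x] = 2%:R /\ (lucP F 1).[x] = x.
Proof. by rewrite /lucP /= !hornerE. Qed.

Lemma seq_ids (F : comNzRingType) (x : F) (f l : nat -> F) :
  f 0%N = 0 -> f 1%N = 1 -> l 0%N = 2%:R -> l 1%N = x ->
  (forall n, f n.+2 = x * f n.+1 + f n) ->
  (forall n, l n.+2 = x * l n.+1 + l n) ->
  forall m, (2%:R * f m.+1 - x * f m = l m) /\            (2%:R * l m.+1 - x * l m = (x ^+ 2 + 4%:R) * f m).
Proof.
move=> f0 f1 l0 l1 fS lS.
suff H : forall m, ((2%:R * f m.+1 - x * f m = l m) /\            (2%:R * l m.+1 - x * l m = (x ^+ 2 + 4%:R) * f m)) /\   ((2%:R * f m.+2 - x * f m.+1 = l m.+1) /\            (2%:R * l m.+2 - x * l m.+1 = (x ^+ 2 + 4%:R) * f m.+1)).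
  by move=> m; case: (H m).
elim=> [|k [[A1 A2] [B1 B2]]].
  by rewrite !fS !lS f0 f1 l0 l1; split; split; ring.
split; first by split.
rewrite fS in B1.
rewrite !fS !lS -B1 -A1; split; ring.
Qed.

Lemma id1 (F : comNzRingType) (x : F) m :
  2%:R * (fibP F m.+1).[x] - x * (fibP F m).[x] = (lucP F m).[x].
Proof.
have [f0 f1] := fib01 F x; have [l0 l1] := luc01 F x.
by have [] := @seq_ids F x _ _ f0 f1 l0 l1 (fibE F x) (lucE F x) m.
Qed.

Lemma id2 (F : comNzRingType) (x : F) m :
  2%:R * (lucP F m.+1).[x] - x * (lucP F m).[x] = (x ^+ 2 + 4%:R) * (fibP F m).[x].
Proof.
have [f0 f1] := fib01 F x; have [l0 l1] := luc01 F x.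
by have [] := @seq_ids F x _ _ f0 f1 l0 l1 (fibE F x) (lucE F x) m.
Qed.

Lemma sq_eq (F : fieldType) (x a : F) : x ^+ 2 = a ^+ 2 -> x = a \/ x = - a.
Proof.
move=> h.
have : (x - a) * (x + a) == 0.
  by apply/eqP; rewrite -subr_sqr h subrr.
rewrite mulf_eq0 => /orP [] /eqP e.
  by left; apply/eqP; rewrite -subr_eq0 e.
by right; apply/eqP; rewrite -subr_eq0 opprK e.
Qed.

Theorem corollary9 (R : rcfType) (x : R[i]) (n : nat) :
  x != 0 -> x != 2%:R * 'i -> x != - (2%:R * 'i) ->
  x != sqrtC 2%:R * 'i -> x != - (sqrtC 2%:R * 'i) ->
  (\sum_(0 <= k < n.+1) (2%:R / (x ^+ 2 + 2%:R)) ^+ k * (lucP _ (2 * k)).[x]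
     = 2%:R ^+ n.+1 / (x * (x ^+ 2 + 2%:R) ^+ n) * (fibP _ (2 * n + 2)).[x])
  /\
  (\sum_(0 <= k < n.+1) (2%:R / (x ^+ 2 + 2%:R)) ^+ k * (fibP _ (2 * k)).[x]
     = (x ^+ 2 + 2%:R) / (x * (x ^+ 2 + 4%:R)) *
       ((2%:R / (x ^+ 2 + 2%:R)) ^+ n.+1 * (lucP _ (2 * n + 2)).[x] - 2%:R)).
Proof.
move=> x0 h1 h2 h3 h4.
have y0 : x ^+ 2 + 2%:R != 0.
  apply/negP => /eqP e.
  have : x ^+ 2 = (sqrtC 2%:R * 'i) ^+ 2.
    rewrite exprMn sqrtCK sqrCi. apply/eqP; rewrite -subr_eq0 -e; apply/eqP; ring.
  by case/sq_eq => /eqP; [rewrite (negbTE h3) | rewrite (negbTE h4)].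
have z0 : x ^+ 2 + 4%:R != 0.
  apply/negP => /eqP e.
  have : x ^+ 2 = (2%:R * 'i) ^+ 2.
    rewrite exprMn sqrCi. apply/eqP; rewrite -subr_eq0 -e; apply/eqP; ring.
  by case/sq_eq => /eqP; [rewrite (negbTE h1) | rewrite (negbTE h2)].
set y := x ^+ 2 + 2%:R in y0 *.
set z := x ^+ 2 + 4%:R in z0 *.
split.
  elim: n => [|n IH].
    rewrite big_nat1 muln0 expr0 mul1r /fibP /lucP /= !hornerE /=.
    field; exact: x0.
  rewrite big_nat_recr //= IH.
  have e1 : (2 * n.+1 = 2 * n + 2)%N by lia.
  have e2 : (2 * n + 2 + 2 = (2 * n + 2).+2)%N by lia.
  rewrite e1 e2 fibE -id1.
  set m := (2 * n + 2)%N.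
  have Q0 : y ^+ n != 0 by rewrite expf_neq0.
  rewrite !expr_div_n !exprS.
  move: Q0; move: (fibP _ m).[x] (fibP _ m.+1).[x] (2 ^+ n : R[i]) (y ^+ n) => a b P Q Q0.
  rewrite /y; field; apply/and3P; split => //.
have [f0 _] := fib01 _ x; have [l0 l1] := luc01 _ x.
elim: n => [|n IH].
  rewrite big_nat1 muln0 expr0 mul1r f0 (lucE _ x 0) l0 l1 expr1.
  rewrite /y /z; field; by rewrite ?Q0 ?y0 ?z0 ?x0.
rewrite big_nat_recr //= IH.
have e1 : (2 * n.+1 = 2 * n + 2)%N by lia.
have e2 : (2 * n + 2 + 2 = (2 * n + 2).+2)%N by lia.
rewrite e1 e2 lucE.
set m := (2 * n + 2)%N.
have hf : (fibP _ m).[x] = (2%:R * (lucP _ m.+1).[x] - x * (lucP _ m).[x]) / z.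
  by rewrite id2 -/z mulrC mulKf.
rewrite hf.
have Q0 : y ^+ n != 0 by rewrite expf_neq0.
rewrite !expr_div_n !exprS.
move: Q0; move: (lucP _ m).[x] (lucP _ m.+1).[x] (2 ^+ n : R[i]) (y ^+ n) => a b P Q Q0.
rewrite /y /z; field; by rewrite ?Q0 ?y0 ?z0 ?x0.
Qed.
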